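(* Let $(X,d)$ be a quasi-pseudometric space and $\varphi:X\to\mathbb{R}\cup\{\infty\}$ a proper bounded below function. For $x\in X$ let $S(x)=\{y\in X:\varphi(y)+d(y,x)\le\varphi(x)\}$. The following statements are equivalent: (wEk) there exists $z\in X$ such that $\varphi(y)=\varphi(z)$ for all $y\in S(z)$; (Tak) if for every $x\in X$ with $\inf\varphi(X)<\varphi(x)$ there exists $y\in S(x)$ with $\varphi(y)<\varphi(x)$, then there exists $z\in X$ with $\varphi(z)=\inf\varphi(X)$; (Car) for every mapping $T:X\to X$ satisfying $Tx\in S(x)$ for all $x\in X$, there exists $z\in X$ with $\varphi(Tz)=\varphi(z)$.
   Context: A quasi-pseudometric on $X$ is $d:X\times X\to[0,\infty)$ with $d(x,x)=0$ and $d(x,z)\le d(x,y)+d(y,z)$ for all $x,y,z$ (symmetry not assumed). $\varphi$ is proper if $\varphi(x)<\infty$ for some $x$. *)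

(* Defs.v *)
(* R : realType, phi valued in extended reals \bar R
   (with the standing hypothesis that phi never takes the value -oo). *)
From mathcomp Require Import all_boot all_order all_algebra.
From mathcomp Require Import all_classical all_reals.
From mathcomp Require Export ereal.

Set Implicit Arguments.
Unset Strict Implicit.
Unset Printing Implicit Defensive.

Import Order.TTheory GRing.Theory Num.Theory.
Local Open Scope ring_scope.
Local Open Scope ereal_scope.

Definition quasi_pseudometric (R : realType) (X : Type) (d : X -> X -> R) : Prop :=
  (forall x y, (0 <= d x y)%R) /\ (forall x, d x x = 0%R) /\
  (forall x y z, (d x z <= d x y + d y z)%R).

Definition no_minus_infty (R : realType) (X : Type) (phi : X -> \bar R) : Prop :=
  forall x, phi x != -oo.

Definition proper_fun (R : realType) (X : Type) (phi : X -> \bar R) : Prop :=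
  exists x, phi x < +oo.

Definition bounded_below (R : realType) (X : Type) (phi : X -> \bar R) : Prop :=
  exists m : R, forall x, m%:E <= phi x.

Definition Sset (R : realType) (X : Type) (d : X -> X -> R) (phi : X -> \bar R)
  (x : X) : X -> Prop :=
  fun y => phi y + (d y x)%:E <= phi x.

Definition infphi (R : realType) (X : Type) (phi : X -> \bar R) : \bar R :=
  ereal_inf (range phi).

Definition wEk (R : realType) (X : Type) (d : X -> X -> R) (phi : X -> \bar R) : Prop :=
  exists z, forall y, Sset d phi z y -> phi y = phi z.

Definition Tak (R : realType) (X : Type) (d : X -> X -> R) (phi : X -> \bar R) : Prop :=
  (forall x, infphi phi < phi x -> exists y, Sset d phi x y /\ phi y < phi x) ->
  exists z, phi z = infphi phi.

Definition Car (R : realType) (X : Type) (d : X -> X -> R) (phi : X -> \bar R) : Prop :=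
  forall T : X -> X, (forall x, Sset d phi x (T x)) -> exists z, phi (T z) = phi z.

(* Main.v *)
Require Import Defs.
From mathcomp Require Import all_boot all_order all_algebra.
From mathcomp Require Import all_classical all_reals.

Import Order.TTheory GRing.Theory Num.Theory.
Local Open Scope ereal_scope.

Lemma S_le (R : realType) (X : Type) (d : X -> X -> R) (phi : X -> \bar R) x y :
  quasi_pseudometric d -> Sset d phi x y -> phi y <= phi x.
Proof.
move=> [d0 _] H; apply: le_trans H; apply: leeDl; rewrite lee_fin; exact: d0.
Qed.

Lemma S_lt (R : realType) (X : Type) (d : X -> X -> R) (phi : X -> \bar R) x y :
  quasi_pseudometric d -> Sset d phi x y -> phi y <> phi x -> phi y < phi x.
Proof.
move=> qd H ne; rewrite lt_neqAle (@S_le _ _ d phi x y qd H) andbT; exact/eqP.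
Qed.

Lemma inf_le (R : realType) (X : Type) (phi : X -> \bar R) x : infphi phi <= phi x.
Proof. by apply: ereal_inf_lbound; exists x. Qed.

Lemma notwEk (R : realType) (X : Type) (d : X -> X -> R) (phi : X -> \bar R) :
  ~ wEk d phi -> forall z, exists y, Sset d phi z y /\ phi y <> phi z.
Proof.
move=> nw z; apply: contrapT => nex; apply: nw; exists z => y Sy.
apply: contrapT => ne; apply: nex; by exists y.
Qed.

Theorem theorem3p8 (R : realType) (X : Type) (d : X -> X -> R) (phi : X -> \bar R) :
  quasi_pseudometric d -> no_minus_infty phi -> proper_fun phi -> bounded_below phi ->
  (wEk d phi <-> Tak d phi) /\ (wEk d phi <-> Car d phi).
Proof.
move=> qd _ _ _; split; split.
- move=> [z Hz] H; exists z; apply/eqP; rewrite eq_le (@inf_le _ _ phi z) andbT.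
  rewrite leNgt; apply/negP => lt.
  have [y [Sy ly]] := H z lt.
  by move: ly; rewrite (Hz y Sy) ltxx.
- move=> T; apply: contrapT => nw.
  have N := @notwEk _ _ d phi nw.
  have [z Hz] : exists z, phi z = infphi phi.
    apply: T => x _; have [y [Sy ne]] := N x; exists y; split => //.
    exact: (@S_lt _ _ d phi _ _ qd).
  have [y [Sy ne]] := N z.
  have := @S_lt _ _ d phi _ _ qd Sy ne; rewrite Hz => lt.
  by move: (@inf_le _ _ phi y); rewrite leNgt lt.
- move=> [z Hz] T HT; exists z; exact: Hz.
- move=> C; apply: contrapT => nw.
  have [T HT] := choice (@notwEk _ _ d phi nw).
  have [z Hz] := C T (fun x => proj1 (HT x)).
  exact: (proj2 (HT z) Hz).
Qed.
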